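(* Let $d>1$ and $a_n=1/n^d$ for all $n\in\mathbb{N}$. Let $\lambda=(\lambda_n)$ be complex numbers with $\operatorname{re}\lambda_n\le0$ for all $n$ and $\lim_{n\to\infty}\lambda_n/a_n=0$. Define $\beta_n:=\frac1n\sum_{m=1}^\infty\ln|1-\lambda_m/a_n|$. Then $\lim_{n\to\infty}\beta_n=0$. *)

(* Defs.v *)
From HB Require Import structures.
From mathcomp Require Import all_boot all_order all_algebra.
From mathcomp Require Import all_classical all_reals all_analysis.
From mathcomp Require Import complex.
Set Implicit Arguments. Unset Strict Implicit. Unset Printing Implicit Defensive.
Import Order.TTheory GRing.Theory Num.Theory.
Local Open Scope ring_scope.

Definition aseq (R : realType) (d : R) (n : nat) : R := ((n%:R : R) `^ d)^-1.

(* beta_n = (1/n) * sum_{m>=1} ln |1 - lambda_m / a_n|, as an extended real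
   (the series has nonnegative terms when Re lambda_m <= 0, so it always has a
   value in [0, +oo]). *)
Definition beta (R : realType) (d : R) (lam : nat -> R[i]) (n : nat) : \bar R :=
  ((n%:R : R)^-1)%:E *
  (\sum_(1 <= m <oo) (ln (Normc.normc (1 - lam m / real_complex R (aseq d n))))%:E)%E.

(* Main.v *)
Require Import Defs.
From HB Require Import structures.
From mathcomp Require Import all_boot all_order all_algebra.
From mathcomp Require Import all_classical all_reals all_analysis.
From mathcomp Require Import complex.
From mathcomp Require Import lra ring.
Import Order.TTheory GRing.Theory Num.Theory.
Local Open Scope classical_set_scope.
Local Open Scope ring_scope.

Section Aux.
Variable R : realType.
Implicit Types s x y q : R.

Lemma ln2_le1 : ln (2 : R) <= 1.
Proof. by have := @le_ln1Dx R 1 ltac:(lra); rewrite (_ : 1 + 1 = 2). Qed.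

Lemma ln_le_pow s x : 0 < s <= 1 -> 0 <= x -> ln (1 + x) <= x `^ s / s.
Proof.
move=> /andP[s0 s1] x0.
have si : 1 <= s^-1 by rewrite invf_ge1.
have Xs0 : 0 <= x `^ s by apply: powR_ge0.
have H1 : x `^ s <= x `^ s / s by rewrite ler_peMr.
have [x1|x1] := lerP x 1.
  apply: le_trans (le_ln1Dx _) _; first lra.
  apply: le_trans H1.
  have [->|xp] := eqVneq x 0; first by [].
  by apply: ger1_powR => //; rewrite lt_def xp x0.
have xp : 0 < x by lra.
have Xp : 0 < x `^ s by apply: powR_gt0.
have h1 : ln (1 + x) <= ln (2 * x).
  by rewrite ler_ln ?posrE; lra.
rewrite lnM ?posrE // in h1.
have h2 : ln (x `^ s) <= x `^ s - 1.
  by have := @le_ln1Dx R (x `^ s - 1) ltac:(lra); rewrite addrC subrK.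
rewrite ln_powR in h2.
have h3 : ln x <= (x `^ s - 1) / s.
  by rewrite ler_pdivlMr // mulrC.
have := ln2_le1.
rewrite mulrBl mul1r in h3.
set t := s^-1 in si h3 *.
change (ln (2:R) <= 1 -> ln (1 + x) <= x `^ s * t); lra.
Qed.

Lemma powRE' y q : 0 < y -> y `^ q = expR (q * ln y).
Proof. by move=> y0; rewrite /powR gt_eqF. Qed.

Lemma tele_pow q y : 0 < q -> 0 < y ->
  q * ((y + 1) `^ (q + 1))^-1 <= (y `^ q)^-1 - ((y + 1) `^ q)^-1.
Proof.
move=> q0 y0.
have a0 : 0 < y + 1 by lra.
rewrite !powRE' // -!expRN.
set L := ln (y + 1); set l := ln y.
have hl : l - L <= - (y + 1)^-1.
  rewrite /l /L -ln_div ?posrE //.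
  have -> : y / (y + 1) = 1 + (- (y + 1)^-1).
    by field; lra.
  apply: le_ln1Dx.
  have : (y + 1)^-1 < 1 by rewrite invf_lt1 //; lra.
  lra.
have e1 : expR (- (q * l)) = expR (- (q * L)) * expR (q * (L - l)).
  by rewrite -expRD; congr expR; ring.
have e2 : expR (- ((q + 1) * L)) = expR (- (q * L)) * (y + 1)^-1.
  rewrite (_ : - ((q + 1) * L) = - (q * L) + - L); last by ring.
  by rewrite expRD (expRN L) /L lnK // posrE.
have e3 : 1 + q * (y + 1)^-1 <= expR (q * (L - l)).
  apply: le_trans (expR_ge1Dx _).
  have : q * (y+1)^-1 <= q * (L - l) by rewrite ler_pM2l //; lra.
  lra.
rewrite e1 e2.
have E0 : 0 < expR (- (q * L)) by apply: expR_gt0.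
set E := expR (- (q * L)) in E0 *.
set F := expR (q * (L - l)) in e3 *.
set u := (y+1)^-1 in e3 *.
have : E * (1 + q * u) <= E * F by rewrite ler_pM2l.
nra.
Qed.


Lemma tele_sqrt y : 0 <= y ->
  (Num.sqrt (y + 1))^-1 <= 2 * (Num.sqrt (y + 1) - Num.sqrt y).
Proof.
move=> y0.
have a0 : 0 < Num.sqrt (y + 1) by rewrite sqrtr_gt0; lra.
have b0 : 0 <= Num.sqrt y := sqrtr_ge0 y.
have ea : Num.sqrt (y + 1) ^+ 2 = y + 1 by rewrite sqr_sqrtr //; lra.
have eb : Num.sqrt y ^+ 2 = y by rewrite sqr_sqrtr.
rewrite -(ler_pM2r a0) mulVf ?gt_eqF //.
set a := Num.sqrt (y + 1) in a0 ea *; set b := Num.sqrt y in b0 eb *.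
rewrite expr2 in ea eb.
nra.
Qed.


Lemma tele_bound (f P : nat -> R) a N U :
  (forall k, (a <= k)%N -> f k <= P k.+1 - P k) ->
  (forall k, (a <= k)%N -> P k <= U) ->
  \sum_(a <= k < N) f k <= U - P a.
Proof.
move=> hf hP.
have Pa := hP a (leqnn a).
have [Na|aN] := leqP N a.
  by rewrite big_geq // subr_ge0.
apply: le_trans (ler_sum_nat (G := fun k => P k.+1 - P k) _) _.
  by move=> i /andP[ai _]; apply: hf.
rewrite telescope_sumr; last exact: ltnW.
have := hP N (ltnW aN); lra.
Qed.

Lemma sum_sqrt n N :
  \sum_(1 <= m < N) (if (m <= n)%N then (Num.sqrt (m%:R : R))^-1 else 0)
  <= 2 * Num.sqrt (n%:R : R).
Proof.
set P := fun k : nat => 2 * Num.sqrt ((minn k.-1 n)%:R : R).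
have P1 : P 1%N = 0 by rewrite /P /= min0n sqrtr0 mulr0.
apply: le_trans (@tele_bound _ P _ _ (2 * Num.sqrt (n%:R : R)) _ _) _; last by rewrite P1 subr0.
  move=> k k1; rewrite /P /=.
  case: ifP => kn.
    rewrite (minn_idPl kn) (minn_idPl (leq_trans (leq_pred k) kn)).
    have := @tele_sqrt (k.-1%:R) (ler0n _ _).
    rewrite natr1 prednK //; lra.
  have nk : (n <= k.-1)%N by move/negbT: kn; rewrite -ltnNge; case: k k1 => // k' _.
  rewrite (minn_idPr nk) (minn_idPr (leq_trans nk (leq_pred k))); lra.
move=> k _; rewrite /P ler_pM2l // ler_sqrt // ler_nat; exact: geq_minr.
Qed.

Lemma sum_pow n N q : (1 <= n)%N -> 0 < q ->
  \sum_(1 <= m < N) (if (n < m)%N then ((m%:R : R) `^ (q + 1))^-1 else 0)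
  <= ((n%:R : R) `^ q)^-1 / q.
Proof.
move=> n1 q0.
set P := fun k : nat => (((n%:R : R) `^ q)^-1 - ((maxn k.-1 n)%:R `^ q)^-1) / q.
have P1 : P 1%N = 0 by rewrite /P /= max0n subrr mul0r.
apply: le_trans (@tele_bound _ P _ _ (((n%:R : R) `^ q)^-1 / q) _ _) _; last by rewrite P1 subr0.
  move=> k k1; rewrite /P /=.
  case: ifP => kn.
    have nk : (n <= k.-1)%N by case: k k1 kn.
    rewrite (maxn_idPl nk) (maxn_idPl (ltnW kn)).
    have y0 : 0 < (k.-1%:R : R) by rewrite ltr0n; apply: leq_trans nk.
    have := @tele_pow q _ q0 y0.
    rewrite natr1 prednK // => h.
    rewrite -mulrBl ler_pdivlMr // mulrC; lra.
  have nk : (k <= n)%N by rewrite leqNgt kn.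
  rewrite (maxn_idPr nk) (maxn_idPr (leq_trans (leq_pred k) nk)) subrr //.
move=> k _; rewrite /P ler_pM2r ?invr_gt0 // lerBlDr lerDl invr_ge0; exact: powR_ge0.
Qed.

End Aux.
Section Cx.
Variable R : realType.
Import Normc.

Lemma normc_real (r : R) : normc (real_complex R r) = `|r|.
Proof. by rewrite /normc /= expr0n /= addr0 sqrtr_sqr. Qed.

Lemma normc_divr (z : R[i]) (r : R) : 0 < r -> normc (z / real_complex R r) = normc z / r.
Proof. by move=> r0; rewrite normcM normcV normc_real gtr0_norm. Qed.

Lemma normc_1sub_le (w : R[i]) : normc (1 - w) <= 1 + normc w.
Proof. by rewrite -(normc1 R) -(normcN w); apply: le_normcD. Qed.

Lemma Re_divr (z : R[i]) (r : R) : 0 < r -> complex.Re (z / real_complex R r) = complex.Re z / r.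
Proof.
move=> r0; rewrite -fmorphV; case: z => a b /=. by rewrite mulr0 subr0.
Qed.

Lemma normc_1sub_ge (w : R[i]) : complex.Re w <= 0 -> 1 <= normc (1 - w).
Proof.
case: w => a b /= a0.
rewrite -sqrtr1 ler_sqrt; last by rewrite addr_ge0 // sqr_ge0.
have : 1 <= (1 - a) ^+ 2 by rewrite expr2; nra.
have := sqr_ge0 (0 - b). rewrite sqrtr1. lra.
Qed.
End Cx.

Lemma normc_ge0 (R : realType) (z : R[i]) : 0 <= Normc.normc z.
Proof. by case: z => a b; exact: sqrtr_ge0. Qed.

Lemma powR_invr (R : realType) (a s : R) : 0 < a -> (a^-1) `^ s = (a `^ s)^-1.
Proof.
move=> a0; rewrite !powRE' ?invr_gt0 // lnV ?posrE // -expRN; congr expR; ring.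
Qed.

Theorem proposition3 (R : realType) (d : R) (lam : nat -> R[i])
  (hd : 1 < d)
  (hre : forall n, complex.Re (lam n) <= 0)
  (hlim : (fun n => Normc.normc (lam n / real_complex R (aseq d n))) @ \oo --> 0%R) :
  beta d lam n @[n --> \oo] --> 0%E.
Proof.
set e := fun n => Normc.normc (lam n / real_complex R (aseq d n)) in hlim.
have e0 : forall m, 0 <= e m by move=> m; apply: normc_ge0.
have [E hE] : exists E, forall m, e m <= E.
  have := cvg_seq_bounded (cvgP _ hlim).
  move=> /ex_bound; case; first exact: (@globally_properfilter _ _ 0%N).
  move=> E hE; exists E => m.
  by apply: le_trans (hE m I); rewrite ger0_norm.
have E0 : 0 <= E by apply: le_trans (hE 0%N).
set q := d - 1.
have q0 : 0 < q by rewrite /q; lra.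
have d0 : 0 < d by lra.
set s := (2 * d)^-1.
have s0 : 0 < s by rewrite /s invr_gt0; lra.
have s1 : s <= 1 by rewrite /s invf_le1; lra.
have ds : d * s = 2^-1 by rewrite /s; field; lra.
set P := fun k : nat => (k%:R : R) `^ d.
have Pp : forall k, (1 <= k)%N -> 0 < P k.
  by move=> k k1; rewrite /P powR_gt0 // ltr0n.
have Ps : forall k, (P k) `^ s = Num.sqrt (k%:R : R).
  by move=> k; rewrite /P -powRrM ds powR12_sqrt.
have eE : forall m, (1 <= m)%N -> e m = Normc.normc (lam m) * P m.
  by move=> m m1; rewrite /e /aseq -/(P m) normc_divr ?invr_gt0 ?Pp // invrK.
set T := fun n m => ln (Normc.normc (1 - lam m / real_complex R (aseq d n))).
have T1 : forall n m, (1 <= n)%N -> 1 <= Normc.normc (1 - lam m / real_complex R (aseq d n)).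
  move=> n m n1; apply: normc_1sub_ge.
  rewrite Re_divr /aseq -/(P n) ?invr_gt0 ?Pp //.
  have := hre m; have := Pp n n1; rewrite invrK; nra.
have T0 : forall n m, (1 <= n)%N -> 0 <= T n m.
  by move=> n m n1; apply: ln_ge0; apply: T1.
have Tle : forall n m, (1 <= n)%N -> (1 <= m)%N -> T n m <= ln (1 + e m * (P n / P m)).
  move=> n m n1 m1.
  have h1 : 0 < 1 + e m * (P n / P m).
    have : 0 <= e m * (P n / P m) by rewrite mulr_ge0 // divr_ge0 // ltW ?Pp.
    lra.
  have h2 : 0 < Normc.normc (1 - lam m / real_complex R (aseq d n)).
    by apply: lt_le_trans (T1 n m n1).
  rewrite /T ler_ln ?posrE //.
  apply: le_trans (normc_1sub_le _ _) _.
  rewrite /aseq -/(P n) normc_divr ?invr_gt0 ?Pp // invrK eE // lerD2l.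
  have := Pp m m1; move=> pm; by rewrite -mulrA [P m * _]mulrC divfK ?gt_eqF.
have sinv : s^-1 = 2 * d by rewrite /s invrK.
have key : forall n (eta : R) M N, (1 <= n)%N -> (M <= n)%N -> 0 <= eta ->
    (forall m, (M <= m)%N -> e m <= eta) ->
    \sum_(1 <= m < N) T n m <= 4 * d * eta `^ s * n%:R
       + 4 * d * E `^ s * Num.sqrt (M%:R) * Num.sqrt (n%:R) + eta * n%:R / q.
  move=> n eta M N n1 Mn eta0 heta.
  set f1 := fun k m : nat => if (m <= k)%N then (Num.sqrt (m%:R : R))^-1 else 0.
  set f3 := fun m : nat => if (n < m)%N then ((m%:R : R) `^ (q + 1))^-1 else 0.
  have f1ge0 : forall k m, 0 <= f1 k m.
    by move=> k m; rewrite /f1; case: ifP => // _; rewrite invr_ge0 sqrtr_ge0.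
  have f3ge0 : forall m, 0 <= f3 m.
    by move=> m; rewrite /f3; case: ifP => // _; rewrite invr_ge0 powR_ge0.
  have sn0 : 0 <= Num.sqrt (n%:R : R) := sqrtr_ge0 _.
  have es0 : 0 <= eta `^ s := powR_ge0 _ _.
  have Es0 : 0 <= E `^ s := powR_ge0 _ _.
  apply: le_trans (ler_sum_nat (G := fun m => 2 * d * eta `^ s * Num.sqrt (n%:R) * f1 n m
     + 2 * d * E `^ s * Num.sqrt (n%:R) * f1 M m + eta * P n * f3 m) _) _.
    move=> m /andP[m1 _].
    have hT := Tle n m n1 m1.
    have pm := Pp m m1; have pn := Pp n n1.
    have x0 : 0 <= e m * (P n / P m) by rewrite mulr_ge0 // divr_ge0 // ltW.
    have c1 : 0 <= 2 * d * eta `^ s * Num.sqrt (n%:R) * f1 n m.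
      by rewrite !mulr_ge0 //; lra.
    have c2 : 0 <= 2 * d * E `^ s * Num.sqrt (n%:R) * f1 M m.
      by rewrite !mulr_ge0 //; lra.
    have c3 : 0 <= eta * P n * f3 m by rewrite !mulr_ge0 // ltW.
    case: (ltnP n m) => [nm | mn].
      have hx := le_ln1Dx (ltac:(lra) : -1 < e m * (P n / P m)).
      have em : e m <= eta by apply: heta; apply: leq_trans (ltnW nm).
      have : e m * (P n / P m) <= eta * P n * f3 m.
        rewrite /f3 nm /q subrK -/(P m) mulrA.
        by apply: ler_wpM2r; [rewrite invr_ge0 ltW | apply: ler_wpM2r; [apply: ltW|]].
      lra.
    have f3m : f3 m = 0 by rewrite /f3 ltnNge mn.
    have hl := @ln_le_pow R s _ (ltac:(lra) : 0 < s <= 1) x0.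
    rewrite (@powRM R (e m) (P n / P m) s) in hl; [|exact: e0|by rewrite divr_ge0 // ltW].
    rewrite (@powRM R (P n) ((P m)^-1) s) in hl; [|exact: ltW|by rewrite invr_ge0 ltW].
    rewrite (@powR_invr R (P m) s pm) !Ps in hl.
    rewrite sinv in hl.
    have im0 : 0 <= (Num.sqrt (m%:R : R))^-1 by rewrite invr_ge0 sqrtr_ge0.
    have hes0 : 0 <= e m `^ s := powR_ge0 _ _.
    have [Mm|mM] := leqP M m.
      have : e m `^ s <= eta `^ s.
        by apply: (ge0_ler_powR (ltW s0)); rewrite ?nnegrE ?e0 //; exact: heta.
      have f1n : f1 n m = (Num.sqrt (m%:R : R))^-1 by rewrite /f1 mn.
      rewrite f1n in c1 *.
      move=> h.
      have : e m `^ s * (Num.sqrt n%:R * (Num.sqrt m%:R)^-1) * (2 * d)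
          <= eta `^ s * (Num.sqrt n%:R * (Num.sqrt m%:R)^-1) * (2 * d).
        by rewrite ler_wpM2r ?ler_wpM2r ?mulr_ge0 //; lra.
      lra.
    have : e m `^ s <= E `^ s by apply: (ge0_ler_powR (ltW s0)); rewrite ?nnegrE ?e0 //.
    have f1M : f1 M m = (Num.sqrt (m%:R : R))^-1 by rewrite /f1 ltnW.
    rewrite f1M in c2 *.
    have im1 : (Num.sqrt (m%:R : R))^-1 <= 1.
      by rewrite invf_le1 ?sqrtr_gt0 ?ltr0n // -{1}sqrtr1 ler_sqrt ?ler1n.
    move=> h.
    have : e m `^ s * (Num.sqrt n%:R * (Num.sqrt m%:R)^-1) * (2 * d)
        <= E `^ s * (Num.sqrt n%:R * (Num.sqrt m%:R)^-1) * (2 * d).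
      by rewrite ler_wpM2r ?ler_wpM2r ?mulr_ge0 //; lra.
    lra.
  rewrite !big_split /= -!mulr_sumr.
  have h1 : \sum_(1 <= i < N) f1 n i <= 2 * Num.sqrt (n%:R : R) := sum_sqrt R n N.
  have h2 : \sum_(1 <= i < N) f1 M i <= 2 * Num.sqrt (M%:R : R) := sum_sqrt R M N.
  have h3 : \sum_(1 <= i < N) f3 i <= ((n%:R : R) `^ q)^-1 / q := sum_pow R n N q n1 q0.
  have sn2 : Num.sqrt (n%:R : R) * Num.sqrt (n%:R) = n%:R by rewrite -expr2 sqr_sqrtr.
  have pn := Pp n n1.
  have nq0 : 0 < (n%:R : R) `^ q by rewrite powR_gt0 // ltr0n.
  have Pn : P n = n%:R * (n%:R : R) `^ q by rewrite /P /q mulr_powRB1.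
  have k1 := ler_wpM2l (ltac:(by rewrite !mulr_ge0 //; lra) : 0 <= 2 * d * eta `^ s * Num.sqrt (n%:R : R)) h1.
  have k2 := ler_wpM2l (ltac:(by rewrite !mulr_ge0 //; lra) : 0 <= 2 * d * E `^ s * Num.sqrt (n%:R : R)) h2.
  have k3 := ler_wpM2l (ltac:(by rewrite !mulr_ge0 // ltW) : 0 <= eta * P n) h3.
  have e1 : 2 * d * eta `^ s * Num.sqrt (n%:R : R) * (2 * Num.sqrt (n%:R : R)) = 4 * d * eta `^ s * n%:R.
    by transitivity (4 * d * eta `^ s * (Num.sqrt (n%:R : R) * Num.sqrt (n%:R : R))); [ring | rewrite sn2].
  have e2 : 2 * d * E `^ s * Num.sqrt (n%:R : R) * (2 * Num.sqrt (M%:R : R)) = 4 * d * E `^ s * Num.sqrt (M%:R) * Num.sqrt (n%:R).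
    by ring.
  have e3 : eta * P n * (((n%:R : R) `^ q)^-1 / q) = eta * n%:R / q.
    by rewrite Pn; field; rewrite !gt_eqF.
  rewrite e1 in k1; rewrite e2 in k2; rewrite e3 in k3.
  lra.
set S := fun n => (\sum_(1 <= m <oo) (T n m)%:E)%E.
have Sle : forall n (eta : R) M, (1 <= n)%N -> (M <= n)%N -> 0 <= eta ->
    (forall m, (M <= m)%N -> e m <= eta) ->
    (S n <= (4 * d * eta `^ s * n%:R
       + 4 * d * E `^ s * Num.sqrt (M%:R) * Num.sqrt (n%:R) + eta * n%:R / q)%:E)%E.
  move=> n eta M n1 Mn eta0 heta.
  apply: lime_le.
    by apply: is_cvg_nneseries => i _ _; rewrite lee_fin; apply: T0.
  by apply: nearW => N; rewrite sumEFin lee_fin; apply: key.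
have S0 : forall n, (1 <= n)%N -> (0 <= S n)%E.
  by move=> n n1; apply: nneseries_ge0 => i _ _; rewrite lee_fin; apply: T0.
have Sfin : forall n, (1 <= n)%N -> S n \is a fin_num.
  move=> n n1; rewrite ge0_fin_numE ?S0 //.
  apply: le_lt_trans (Sle n E 0%N n1 (leq0n _) E0 (fun m _ => hE m)) _.
  exact: ltry.
have bE : forall n, (1 <= n)%N -> beta d lam n = ((n%:R)^-1 * fine (S n))%:E.
  by move=> n n1; rewrite EFinM fineK ?Sfin.
have FS : forall n (eta : R) M, (1 <= n)%N -> (M <= n)%N -> 0 <= eta ->
    (forall m, (M <= m)%N -> e m <= eta) ->
    0 <= fine (S n) <= 4 * d * eta `^ s * n%:R
       + 4 * d * E `^ s * Num.sqrt (M%:R) * Num.sqrt (n%:R) + eta * n%:R / q.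
  move=> n eta M n1 Mn eta0 heta.
  have := Sle n eta M n1 Mn eta0 heta; have := S0 n n1.
  by rewrite -(fineK (Sfin n n1)) !lee_fin => -> ->.
apply/fine_cvgP; split.
  apply: filterS (nbhs_infty_ge 1%N) => n n1.
  by rewrite bE.
apply/cvgrPdist_le => eps eps0.
set eta := Num.min ((eps / (12 * d)) `^ (2 * d)) (q * eps / 3).
have epsd : 0 < eps / (12 * d) by rewrite divr_gt0 //; lra.
have eta0 : 0 < eta.
  by rewrite /eta lt_min powR_gt0 //=; rewrite !mulr_gt0 //.
have [M _ hM] := (proj1 (cvgrPdist_le _ _) hlim) eta eta0.
have hM' : forall m, (M <= m)%N -> e m <= eta.
  by move=> m Mm; have := hM m Mm; rewrite /= sub0r normrN ger0_norm.
have etas : eta `^ s <= eps / (12 * d).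
  have : eta <= (eps / (12 * d)) `^ (2 * d) by rewrite /eta ge_min lexx.
  move=> h; have := ge0_ler_powR (ltW s0) (ltW eta0 : eta \in Num.nneg) (powR_ge0 _ _ : _ \in Num.nneg) h.
  by rewrite -powRrM /s mulfV ?powRr1 //; [apply: ltW | lra].
have etaq : eta <= q * eps / 3 by rewrite /eta ge_min lexx orbT.
set C := 4 * d * E `^ s * Num.sqrt (M%:R : R).
have C0 : 0 <= C by rewrite /C !mulr_ge0 ?powR_ge0 ?sqrtr_ge0 //; lra.
have [K _ hK] := nbhs_infty_ger ((3 * C / eps) ^+ 2).
exists (maxn (maxn 1 M) K) => // n /= hn.
have nM : (maxn 1 M <= n)%N by apply: leq_trans hn; apply: leq_maxl.
have nK : (3 * C / eps) ^+ 2 <= n%:R by apply: hK; apply: leq_trans hn; apply: leq_maxr.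
have n1 : (1 <= n)%N by apply: leq_trans nM; apply: leq_maxl.
have Mn : (M <= n)%N by apply: leq_trans nM; apply: leq_maxr.
rewrite /= bE // /= sub0r normrN.
have /andP[F0 F1] := FS n eta M n1 Mn (ltW eta0) hM'.
have np : 0 < (n%:R : R) by rewrite ltr0n.
rewrite ger0_norm ?mulr_ge0 ?invr_ge0 ?ler0n //.
rewrite ler_pdivrMl //.
have sq : 3 * C / eps <= Num.sqrt (n%:R : R).
  have := nK; rewrite -ler_sqrt ?ler0n // sqrtr_sqr => h.
  by apply: le_trans (ler_norm _) h.
have sn2 : Num.sqrt (n%:R : R) * Num.sqrt (n%:R) = n%:R by rewrite -expr2 sqr_sqrtr.
have sn0 : 0 <= Num.sqrt (n%:R : R) := sqrtr_ge0 _.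
have hC : C * Num.sqrt (n%:R) <= eps / 3 * n%:R.
  have : C <= eps / 3 * Num.sqrt (n%:R : R).
    by move: sq; rewrite ler_pdivrMr // => h; lra.
  move=> h; have h2 := ler_wpM2r sn0 h; by rewrite -[eps / 3 * _ * _]mulrA sn2 in h2.
have h1 : 4 * d * eta `^ s * n%:R <= eps / 3 * n%:R.
  apply: ler_wpM2r; first by apply: ltW.
  have : 4 * d * eta `^ s <= 4 * d * (eps / (12 * d)).
    by apply: ler_wpM2l => //; lra.
  suff -> : 4 * d * (eps / (12 * d)) = eps / 3 by [].
  by field; lra.
have h3 : eta * n%:R / q <= eps / 3 * n%:R.
  rewrite ler_pdivrMr // [X in _ <= X]mulrAC; apply: ler_wpM2r; first by apply: ltW.
  lra.
rewrite -/C in F1.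
lra.
Qed.
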